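(* Let $d$ be a positive integer and let $\mu$ be a Borel probability measure on $\mathbb{S}^{d-1}$. Then $$\int_{\mathbb{S}^{d-1}}\int_{\mathbb{S}^{d-1}}\int_{\mathbb{S}^{d-1}}\left|\langle x,y\rangle\langle x,z\rangle\langle y,z\rangle\right|\,d\mu(x)\,d\mu(y)\,d\mu(z)\ge\frac{1}{d^2},$$ with equality if and only if $\mu$ is isotropic and $\langle x,y\rangle\langle x,z\rangle\langle y,z\rangle\ge 0$ for all points $x,y,z$ in the support of $\mu$.
   Context: A Borel probability measure $\mu$ on $\mathbb{S}^{d-1}$ is isotropic if $\int_{\mathbb{S}^{d-1}}xx^T\,d\mu(x)=\frac1d I_d$, equivalently $\int\langle x,y\rangle^2\,d\mu(x)=\frac1d$ for every $y\in\mathbb{S}^{d-1}$. *)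

(* Defs.v *)
From HB Require Import structures.
From mathcomp Require Import all_boot all_order all_algebra.
From mathcomp Require Import all_classical all_reals all_analysis.
Set Implicit Arguments. Unset Strict Implicit. Unset Printing Implicit Defensive.
Import Order.TTheory GRing.Theory Num.Theory.
Import numFieldNormedType.Exports.
Local Open Scope classical_set_scope.
Local Open Scope ring_scope.

Definition Rd (R : realType) (d : nat) : measurableType _ :=
  g_sigma_algebraType (@open 'rV[R]_d).

Definition dotp (R : realType) (d : nat) (x y : Rd R d) : R :=
  \sum_(i < d) (x : 'rV[R]_d) 0 i * (y : 'rV[R]_d) 0 i.

Definition sphere (R : realType) (d : nat) : set (Rd R d) :=
  [set x | dotp x x = 1].
Arguments sphere : clear implicits.

Definition msupport (R : realType) (d : nat)
    (mu : {measure set (Rd R d) -> \bar R}) : set (Rd R d) :=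
  [set x | forall U : set 'rV[R]_d, open U -> U x -> (0 < mu U)%E].

Definition isotropic (R : realType) (d : nat)
    (mu : {measure set (Rd R d) -> \bar R}) : Prop :=
  forall y, sphere R d y ->
    (\int[mu]_(x in sphere R d) ((dotp x y) ^+ 2)%:E = (d%:R^-1)%:E)%E.

(* Main.v *)
Require Import Defs.
From HB Require Import structures.
From mathcomp Require Import all_boot all_order all_algebra.
From mathcomp Require Import all_classical all_reals all_analysis.
From mathcomp Require Import measurable_realfun.
From mathcomp Require Import ring lra.
Import Order.TTheory GRing.Theory Num.Theory.
Import numFieldNormedType.Exports.
Local Open Scope classical_set_scope.
Local Open Scope ring_scope.
Section Alg.
Variable R : realType.
Variable d : nat.
Hypothesis hd : (0 < d)%N.
Variable M : 'I_d -> 'I_d -> R.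
Hypothesis Msym : forall i j, M i j = M j i.
Hypothesis Mpsd : forall v : 'I_d -> R, 0 <= \sum_i \sum_j v i * v j * M i j.
Hypothesis Mtr : \sum_i M i i = 1.

Let D (i j : 'I_d) : R := (i == j)%:R.

Lemma sumD1 (k : 'I_d) (g : 'I_d -> R) : \sum_j D k j * g j = g k.
Proof.
rewrite (bigD1 k) //= /D eqxx mul1r big1 ?addr0 // => j /negbTE.
by rewrite eq_sym => ->; rewrite mul0r.
Qed.

Lemma sumD1c (c : R) (k : 'I_d) (g : 'I_d -> R) : \sum_j c * D k j * g j = c * g k.
Proof.
rewrite -sumD1 big_distrr /=; apply: eq_bigr => j _; ring.
Qed.

Let a : R := d%:R^-1.

Lemma ad : a * d%:R = 1.
Proof. by rewrite /a mulVf // pnatr_eq0 -lt0n. Qed.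

Lemma a_gt0 : 0 < a.
Proof. by rewrite /a invr_gt0 ltr0n. Qed.

Lemma psd_shift (u : 'I_d -> R) k :
  \sum_i \sum_j (u i - a * D k i) * (u j - a * D k j) * M i j =
  \sum_i \sum_j u i * u j * M i j - 2 * a * \sum_j u j * M k j + a ^+ 2 * M k k.
Proof.
have inner i : \sum_j (u i - a * D k i) * (u j - a * D k j) * M i j =
   \sum_j u i * u j * M i j - a * (u i * M i k) - a * D k i * (\sum_j u j * M i j)
   + a ^+ 2 * D k i * M i k.
  rewrite (eq_bigr (fun j => u i * u j * M i j - (a * u i) * (D k j * M i j)
     - (a * D k i) * (u j * M i j) + (a ^+ 2 * D k i) * (D k j * M i j))); last first.
    by move=> j _; ring.
  rewrite !big_split /= !sumrN -!big_distrr /= !sumD1; ring.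
rewrite (eq_bigr _ (fun i _ => inner i)).
rewrite !big_split /= !sumrN !sumD1c.
have -> : \sum_i a * (u i * M i k) = a * \sum_i u i * M i k by rewrite big_distrr.
have -> : \sum_i u i * M i k = \sum_j u j * M k j by apply: eq_bigr => i _; rewrite Msym.
ring.
Qed.


Lemma sq_row i : \sum_j (M i j - a * D i j) ^+ 2 =
  \sum_j M i j * M i j - 2 * a * M i i + a ^+ 2.
Proof.
rewrite (eq_bigr (fun j => M i j * M i j - (2 * a) * D i j * M i j
    + a ^+ 2 * D i j * 1)); last first.
  by move=> j _; rewrite /D; case: (i == j) => /=; ring.
by rewrite !big_split /= sumrN !sumD1c mulr1.
Qed.

Definition T3a := \sum_j \sum_k (\sum_i M i j * M i k) * M j k.

Lemma alg : a ^+ 2 <= T3a /\ (T3a = a ^+ 2 -> forall i j, M i j = a * D i j).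
Proof.
pose P2 := \sum_i \sum_j M i j * M i j.
pose Q := \sum_k \sum_i \sum_j (M k i - a * D k i) * (M k j - a * D k j) * M i j.
pose R2 := \sum_i \sum_j (M i j - a * D i j) ^+ 2.
have Q0 : 0 <= Q by apply: sumr_ge0 => k _; exact: Mpsd.
have R20 : 0 <= R2 by apply: sumr_ge0 => i _; apply: sumr_ge0 => j _; exact: sqr_ge0.
have e1 : \sum_k \sum_i \sum_j M k i * M k j * M i j = T3a.
  rewrite /T3a; under [RHS]eq_bigr do under eq_bigr do rewrite big_distrl /=.
  under [RHS]eq_bigr do rewrite exchange_big /=.
  rewrite [RHS]exchange_big /=.
  by [].
have hQ : Q = T3a - 2 * a * P2 + a ^+ 2.
  rewrite /Q (eq_bigr _ (fun k _ => psd_shift (M k) k)) !big_split /= sumrN.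
  rewrite e1.
  have -> : \sum_k a ^+ 2 * M k k = a ^+ 2 by rewrite -big_distrr /= Mtr mulr1.
  by rewrite /P2 big_distrr.
have hR : R2 = P2 - 2 * a + a ^+ 2 * d%:R.
  rewrite /R2 (eq_bigr _ (fun i _ => sq_row i)) !big_split /= sumrN.
  by rewrite -big_distrr /= Mtr mulr1 sumr_const card_ord mulr_natr.
have key : T3a - a ^+ 2 = Q + 2 * a * R2.
  have dE : d%:R = a^-1 by rewrite /a invrK.
  have a0 : a != 0 by rewrite gt_eqF // a_gt0.
  by rewrite hQ hR dE; field.
have ha := a_gt0.
split.
  rewrite -subr_ge0 key; apply: addr_ge0 => //.
  by apply: mulr_ge0 => //; apply: mulr_ge0 => //; exact: ltW.
move=> hT.
have : Q + 2 * a * R2 = 0 by rewrite -key hT subrr.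
move/eqP; rewrite paddr_eq0 //; last by apply: mulr_ge0 => //; apply: mulr_ge0 => //; exact: ltW.
case/andP=> _; rewrite mulf_eq0 mulf_eq0 pnatr_eq0 /= gt_eqF //= => /eqP R0.
move=> i j; apply/eqP; rewrite -subr_eq0; apply/eqP.
have : \sum_i \sum_j (M i j - a * D i j) ^+ 2 = 0 by [].
move/eqP; rewrite psumr_eq0; last by move=> k _; apply: sumr_ge0 => l _; exact: sqr_ge0.
move/allP/(_ i (mem_index_enum _)); rewrite implyTb psumr_eq0; last by move=> l _; exact: sqr_ge0.
by move/allP/(_ j (mem_index_enum _)); rewrite implyTb sqrf_eq0 => /eqP.
Qed.

End Alg.
Section Main.
Variable R : realType.
Variable d : nat.
Local Notation T := (Rd R d).
Local Notation S := (sphere R d).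

Lemma mcont (g : 'rV[R]_d -> R) : continuous g ->
  measurable_fun setT (g : T -> R).
Proof.
move=> cg.
apply: (measurability _ (RGenOpens.measurableE R)).
move=> _ [_ [a [b ->] <-]].
rewrite setTI.
apply: sub_sigma_algebra.
apply: open_comp; last exact: interval_open.
by move=> x _; exact: cg.
Qed.

Definition co (x : T) (i : 'I_d) : R := (x : 'rV[R]_d) 0 i.

Lemma mcoord (i : 'I_d) : measurable_fun setT (fun x : T => co x i).
Proof. apply: mcont; exact: coord_continuous. Qed.

Lemma mdotp d' (U : measurableType d') (p q : U -> T) :
  measurable_fun setT p -> measurable_fun setT q ->
  measurable_fun setT (fun u => dotp (p u) (q u)).
Proof.
move=> mp mq; rewrite /dotp; apply: measurable_sum => i.
apply: measurable_funM.
  exact: (measurableT_comp (mcoord i) mp).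
exact: (measurableT_comp (mcoord i) mq).
Qed.

Lemma mS : measurable S.
Proof.
have := @mdotp _ T id id (@measurable_id _ _ _) (@measurable_id _ _ _) measurableT [set 1].
rewrite setTI; apply; exact: measurable_set1.
Qed.

Lemma co_le1 x i : S x -> `|co x i| <= 1.
Proof.
rewrite /sphere /= /dotp => Sx.
have : co x i ^+ 2 <= 1.
  rewrite -Sx (bigD1 i) //= expr2 lerDl.
  by apply: sumr_ge0 => j _; rewrite -expr2 sqr_ge0.
move=> h; rewrite ler_norml; apply/andP; split; nra.
Qed.

Lemma dotp_le x y : S x -> S y -> `|dotp x y| <= d%:R.
Proof.
move=> Sx Sy; rewrite /dotp.
apply: (le_trans (ler_norm_sum _ _ _)).
have -> : d%:R = \sum_(i < d) (1 : R) by rewrite sumr_const card_ord.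
apply: ler_sum => i _; rewrite normrM.
have := @co_le1 x i Sx; have := @co_le1 y i Sy; rewrite /co.
move=> h1 h2; rewrite -[1]mul1r; apply: ler_pM => //.
Qed.

Variable mu : probability T R.
Hypothesis hS : mu S = 1%E.
Let muS : (mu : {measure set T -> \bar R}) S = 1%E := hS.

Lemma int_bdd (G : T -> \bar R) (K : R) : measurable_fun S G ->
  (forall x, S x -> (`|G x| <= K%:E)%E) -> mu.-integrable S G.
Proof.
move=> mG hG; apply/integrableP; split => //.
apply: (@le_lt_trans _ _ (\int[mu]_(x in S) (cst K%:E) x)%E).
  apply: ge0_le_integral => //.
  - exact: mS.
  - apply: (measurableT_comp _ mG); exact: abse_measurable.
rewrite (@integral_cst _ _ _ mu S mS).
by rewrite muS mule1 ltry.
Qed.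

Lemma int_bddR (g : T -> R) (K : R) : measurable_fun setT g ->
  (forall x, S x -> `|g x| <= K) -> mu.-integrable S (fun x => (g x)%:E).
Proof.
move=> mg hg; apply: (@int_bdd _ K).
  apply/measurable_EFinP; exact: measurable_funS mg.
by move=> x Sx; rewrite /= lee_fin; exact: hg.
Qed.

Lemma mmono i j : measurable_fun setT (fun x => co x i * co x j).
Proof. by apply: measurable_funM; exact: mcoord. Qed.

Lemma int_mono i j : mu.-integrable S (fun x => (co x i * co x j)%:E).
Proof.
apply: (@int_bddR _ 1); first exact: mmono.
move=> x Sx; rewrite normrM -[1]mul1r; apply: ler_pM => //; exact: co_le1.
Qed.

Definition M i j := fine (\int[mu]_(x in S) (co x i * co x j)%:E)%E.

Lemma ME i j : (\int[mu]_(x in S) (co x i * co x j)%:E)%E = (M i j)%:E.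
Proof. by rewrite fineK //; apply: integrable_fin_num; [exact: mS|exact: int_mono]. Qed.

Definition quad (c : 'I_d -> 'I_d -> R) (x : T) :=
  \sum_i \sum_j c i j * (co x i * co x j).

Lemma mquad c : measurable_fun setT (quad c).
Proof.
apply: measurable_sum => i; apply: measurable_sum => j.
apply: measurable_funM; [exact: measurable_cst|exact: mmono].
Qed.

Lemma int_quad0 c : (\int[mu]_(x in S) (quad c x)%:E = (\sum_i \sum_j c i j * M i j)%:E)%E.
Proof.
rewrite /quad.
under eq_integral do rewrite pair_bigA /= -sumEFin.
rewrite integral_sum //; last first.
  move=> p; under eq_fun do rewrite EFinM; apply: integrableZl; [exact: mS|exact: int_mono].
  exact: mS.
rewrite pair_bigA /= -sumEFin; apply: eq_bigr => p _.
under eq_integral do rewrite EFinM.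
by rewrite integralZl ?ME //; [exact: mS|exact: int_mono].
Qed.

Lemma int_quad c e (U : set T) : measurable U ->
  (\int[mu]_(x in S) (quad c x + e * \1_U x)%:E =
   (\sum_i \sum_j c i j * M i j + e * fine (mu (U `&` S)))%:E)%E.
Proof.
move=> mU.
under eq_integral do rewrite EFinD.
rewrite integralD; first last.
- under eq_fun do rewrite EFinM; apply: integrableZl; first exact: mS.
  apply: (@int_bddR _ 1); first exact: measurable_indic.
  by move=> x _; rewrite indicE; case: (x \in U); rewrite ?normr1 ?normr0.
- apply: (@int_bddR _ (\sum_i \sum_j `|c i j|)); first exact: mquad.
  move=> x Sx; rewrite /quad; apply: (le_trans (ler_norm_sum _ _ _)).
  apply: ler_sum => i _; apply: (le_trans (ler_norm_sum _ _ _)).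
  apply: ler_sum => j _; rewrite normrM -[leRHS]mulr1; apply: ler_wpM2l => //.
  rewrite normrM -[1]mul1r; apply: ler_pM => //; exact: co_le1.
- exact: mS.
rewrite int_quad0 EFinD; congr (_ + _)%E.
under eq_integral do rewrite EFinM.
rewrite integralZl; first last.
- apply: (@int_bddR _ 1); first exact: measurable_indic.
  by move=> x _; rewrite indicE; case: (x \in U); rewrite ?normr1 ?normr0.
- exact: mS.
rewrite integral_indic //; last exact: mS.
rewrite EFinM fineK //; apply: fin_num_measure; apply: measurableI => //; exact: mS.
Qed.


Lemma level_ge (G : T -> \bar R) (K : R) c e (U : set T) : measurable U ->
  measurable_fun S G -> (forall y, S y -> (`|G y| <= K%:E)%E) ->
  (forall y, S y -> ((quad c y + e * \1_U y)%:E <= G y)%E) ->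
  ((\sum_i \sum_j c i j * M i j + e * fine (mu (U `&` S)))%:E
     <= \int[mu]_(y in S) G y)%E.
Proof.
move=> mU mG bG hG; rewrite -int_quad //.
apply: le_integral => //.
- exact: mS.
- apply: (@int_bddR _ (\sum_i \sum_j `|c i j| + `|e|)).
    apply: measurable_funD; first exact: mquad.
    apply: measurable_funM; [exact: measurable_cst|exact: measurable_indic].
  move=> x Sx; apply: (le_trans (ler_normD _ _)); apply: lerD.
    rewrite /quad; apply: (le_trans (ler_norm_sum _ _ _)).
    apply: ler_sum => i _; apply: (le_trans (ler_norm_sum _ _ _)).
    apply: ler_sum => j _; rewrite normrM -[leRHS]mulr1; apply: ler_wpM2l => //.
    rewrite normrM -[1]mul1r; apply: ler_pM => //; exact: co_le1.
  rewrite normrM -[leRHS]mulr1; apply: ler_wpM2l => //.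
  by rewrite indicE; case: (x \in U); rewrite ?normr1 ?normr0.
- exact: (int_bdd _ _ mG bG).
- by move=> y; rewrite inE => Sy; exact: hG.
Qed.

Lemma level_eq (G : T -> \bar R) (K : R) c (N : set T) : measurable N ->
  (mu : {measure set T -> \bar R}) N = 0%E ->
  measurable_fun S G -> (forall y, S y -> (`|G y| <= K%:E)%E) ->
  (forall y, S y -> ~ N y -> G y = (quad c y)%:E) ->
  (\int[mu]_(y in S) G y = (\sum_i \sum_j c i j * M i j)%:E)%E.
Proof.
move=> mN N0 mG bG hG; rewrite -int_quad0.
rewrite (negligible_integral mN mS) //; last exact: (int_bdd _ _ mG bG).
rewrite [RHS](negligible_integral mN mS) //; last first.
  apply: (@int_bddR _ (\sum_i \sum_j `|c i j|)); first exact: mquad.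
  move=> x Sx; rewrite /quad; apply: (le_trans (ler_norm_sum _ _ _)).
  apply: ler_sum => i _; apply: (le_trans (ler_norm_sum _ _ _)).
  apply: ler_sum => j _; rewrite normrM -[leRHS]mulr1; apply: ler_wpM2l => //.
  rewrite normrM -[1]mul1r; apply: ler_pM => //; exact: co_le1.
by apply: eq_integral => y; rewrite inE => -[Sy Ny]; exact: hG.
Qed.

Definition f (x y z : T) := dotp x y * dotp x z * dotp y z.

Definition c1 (y z : T) i j := co y i * co z j * dotp y z.

Lemma f_quad x y z : f x y z = quad (c1 y z) x.
Proof.
rewrite /f /quad /c1 -mulrA {1}/dotp big_distrl /=; apply: eq_bigr => i _.
rewrite {1}/dotp big_distrl big_distrr /=; apply: eq_bigr => j _.
rewrite /co; ring.
Qed.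

Definition K3 : R := d%:R ^+ 3.

Lemma f_bound x y z : S x -> S y -> S z -> `|f x y z| <= K3.
Proof.
move=> Sx Sy Sz; rewrite /f /K3 !normrM !exprS expr0 mulr1 mulrA.
apply: ler_pM; [by rewrite mulr_ge0|by []| |exact: dotp_le].
by apply: ler_pM => //; exact: dotp_le.
Qed.

Lemma int_ind (g : T -> \bar R) :
  (\int[mu]_(x in S) g x = \int[mu]_x (g x * (\1_S x)%:E))%E.
Proof.
rewrite integral_mkcond; apply: eq_integral => x _; rewrite /patch indicE.
by case: ifP => _; rewrite ?mule1 ?mule0.
Qed.

Definition A (y z : T) := (\int[mu]_(x in S) (`|f x y z|)%:E)%E.
Definition B (z : T) := (\int[mu]_(y in S) A y z)%E.

Definition h1 (p : (T * T) * T) := (`|f p.2 p.1.2 p.1.1| * \1_S p.2)%:E.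

Lemma mh1 : measurable_fun setT h1.
Proof.
apply/measurable_EFinP; apply: measurable_funM.
  apply: (measurableT_comp (@normr_measurable _ setT)).
  rewrite /f; apply: measurable_funM; first apply: measurable_funM.
  - apply: mdotp; first exact: measurable_snd.
    exact: (measurableT_comp measurable_snd measurable_fst).
  - apply: mdotp; first exact: measurable_snd.
    exact: (measurableT_comp measurable_fst measurable_fst).
  - apply: mdotp; first exact: (measurableT_comp measurable_snd measurable_fst).
    exact: (measurableT_comp measurable_fst measurable_fst).
apply: (measurableT_comp _ measurable_snd).
exact: measurable_indic mS.
Qed.

Lemma h1_ge0 p : (0 <= h1 p)%E.
Proof. by rewrite /h1 lee_fin mulr_ge0 // indicE. Qed.

Definition F1 := fubini_F mu h1.

Lemma mF1 : measurable_fun setT F1.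
Proof. exact: (@measurable_fun_fubini_tonelli_F _ _ _ _ _ mu h1 mh1 h1_ge0). Qed.

Lemma AE y z : A y z = F1 (z, y).
Proof. by rewrite /A /F1 /fubini_F int_ind. Qed.

Definition h2 (q : T * T) := (F1 q * (\1_S q.2)%:E)%E.

Lemma mh2 : measurable_fun setT h2.
Proof.
apply: emeasurable_funM; first exact: mF1.
apply/measurable_EFinP; apply: (measurableT_comp _ measurable_snd).
exact: measurable_indic mS.
Qed.

Lemma F1_ge0 q : (0 <= F1 q)%E.
Proof. by apply: integral_ge0 => x _; exact: h1_ge0. Qed.

Lemma h2_ge0 q : (0 <= h2 q)%E.
Proof. by rewrite /h2 mule_ge0 // ?F1_ge0 // lee_fin indicE. Qed.

Definition F2 := fubini_F mu h2.

Lemma mF2 : measurable_fun setT F2.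
Proof. exact: (@measurable_fun_fubini_tonelli_F _ _ _ _ _ mu h2 mh2 h2_ge0). Qed.

Lemma BE z : B z = F2 z.
Proof.
rewrite /B /F2 /fubini_F int_ind; apply: eq_integral => y _.
by rewrite AE.
Qed.

Lemma mA z : measurable_fun S (fun y => A y z).
Proof.
apply: (measurable_funS measurableT) => //.
under eq_fun do rewrite AE.
apply: measurable_fun_pair2; exact: mF1.
Qed.

Lemma mB : measurable_fun S B.
Proof.
apply: (measurable_funS measurableT) => //.
rewrite (_ : B = F2); first exact: mF2.
by apply/funext => z; rewrite BE.
Qed.


Lemma mfx y z : measurable_fun S (fun x => (`|f x y z|)%:E).
Proof.
apply/measurable_EFinP; apply: (measurable_funS measurableT) => //.
apply: (measurableT_comp (@normr_measurable _ setT)).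
under eq_fun do rewrite f_quad; exact: mquad.
Qed.

Lemma A_ge0 y z : (0 <= A y z)%E.
Proof. by apply: integral_ge0 => x _; rewrite lee_fin. Qed.

Lemma A_le y z : S y -> S z -> (`|A y z| <= K3%:E)%E.
Proof.
move=> Sy Sz; rewrite gee0_abs ?A_ge0 //.
apply: (@le_trans _ _ (\int[mu]_(x in S) (cst K3%:E) x)%E).
  apply: ge0_le_integral => //.
  all: try exact: mS.
  all: try exact: mfx.
  by move=> x Sx; rewrite lee_fin; exact: f_bound.
by rewrite (@integral_cst _ _ _ mu S mS) muS mule1.
Qed.

Lemma B_ge0 z : (0 <= B z)%E.
Proof. by apply: integral_ge0 => y _; exact: A_ge0. Qed.

Lemma B_le z : S z -> (`|B z| <= K3%:E)%E.
Proof.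
move=> Sz; rewrite gee0_abs ?B_ge0 //.
apply: (@le_trans _ _ (\int[mu]_(y in S) (cst K3%:E) y)%E).
  apply: ge0_le_integral => //.
  all: try exact: mS.
  all: try exact: mA.
  all: try by move=> y _; exact: A_ge0.
  by move=> y Sy; have := @A_le y z Sy Sz; rewrite gee0_abs ?A_ge0.
by rewrite (@integral_cst _ _ _ mu S mS) muS mule1.
Qed.

Definition c2 (z : T) i k := \sum_j M i j * co z j * co z k.
Definition c3 j k := \sum_i M i j * M i k.
Definition T3 := \sum_j \sum_k c3 j k * M j k.
Definition mm U := fine (mu (U `&` S)).

Lemma P1E y z : \sum_i \sum_j c1 y z i j * M i j = quad (c2 z) y.
Proof.
rewrite /quad /c1 /c2; apply: eq_bigr => i _.
under eq_bigr do rewrite /dotp big_distrr big_distrl /=.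
rewrite exchange_big /=; apply: eq_bigr => k _.
rewrite big_distrl /=; apply: eq_bigr => j _; rewrite /co; ring.
Qed.

Lemma P2E z : \sum_i \sum_j c2 z i j * M i j = quad c3 z.
Proof.
rewrite /quad /c2 /c3.
under eq_bigr do under eq_bigr do rewrite big_distrl /=.
under [RHS]eq_bigr do under eq_bigr do rewrite big_distrl /=.
rewrite exchange_big /=.
under eq_bigr do rewrite exchange_big /=.
rewrite exchange_big /=.
apply: eq_bigr => j _; apply: eq_bigr => k _; apply: eq_bigr => i _.
rewrite /co; ring.
Qed.


Lemma eqle (a b : R) : a = b -> a <= b. Proof. by move->. Qed.

Lemma chain e (U V W : set T) : measurable U -> measurable V -> measurable W ->
  (forall x y z, S x -> S y -> S z ->
     f x y z + e * (\1_U x * \1_V y * \1_W z) <= `|f x y z|) ->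
  ((T3 + e * (mm U * mm V * mm W))%:E <= \int[mu]_(z in S) B z)%E.
Proof.
move=> mU mV mW hf.
have hx y z : S y -> S z ->
    ((quad (c2 z) y + (e * mm U * \1_W z) * \1_V y)%:E <= A y z)%E.
  move=> Sy Sz.
  apply: (@le_trans _ _ ((\sum_i \sum_j c1 y z i j * M i j
      + (e * \1_V y * \1_W z) * mm U)%:E)).
    by rewrite P1E lee_fin /mm; apply: eqle; ring.
  apply: (@level_ge _ K3) => //.
  - exact: mfx.
  - by move=> x Sx; rewrite /= lee_fin normr_id; exact: f_bound.
  - move=> x Sx; rewrite lee_fin -f_quad.
    by apply: le_trans (hf x y z Sx Sy Sz); apply: eqle; ring.
have hy z : S z -> ((quad c3 z + (e * mm U * mm V) * \1_W z)%:E <= B z)%E.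
  move=> Sz.
  apply: (@le_trans _ _ ((\sum_i \sum_j c2 z i j * M i j
      + (e * mm U * \1_W z) * mm V)%:E)).
    by rewrite P2E lee_fin /mm; apply: eqle; ring.
  apply: (@level_ge _ K3) => //.
  - exact: mA.
  - by move=> y Sy; exact: A_le.
  - by move=> y Sy; exact: hx.
apply: (@le_trans _ _ ((\sum_i \sum_j c3 i j * M i j
      + (e * mm U * mm V) * mm W)%:E)).
  by rewrite lee_fin /T3; apply: eqle; ring.
apply: (@level_ge _ K3) => //.
all: first [exact: mB | by move=> z Sz; exact: B_le | by move=> z Sz; exact: hy].
Qed.

Lemma chain_eq (N : set T) : measurable N ->
  (mu : {measure set T -> \bar R}) N = 0%E ->
  (forall x y z, S x -> S y -> S z -> ~ N x -> ~ N y -> ~ N z -> 0 <= f x y z) ->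
  (\int[mu]_(z in S) B z = T3%:E)%E.
Proof.
move=> mN N0 hf.
have hx y z : S y -> S z -> ~ N y -> ~ N z -> A y z = (quad (c2 z) y)%:E.
  move=> Sy Sz Ny Nz; rewrite -P1E.
  apply: (@level_eq _ K3 _ N) => //.
  - exact: mfx.
  - by move=> x Sx; rewrite /= lee_fin normr_id; exact: f_bound.
  - by move=> x Sx Nx; rewrite ger0_norm ?f_quad // -f_quad; exact: hf.
have hy z : S z -> ~ N z -> B z = (quad c3 z)%:E.
  move=> Sz Nz; rewrite -P2E.
  apply: (@level_eq _ K3 _ N) => //.
  - exact: mA.
  - by move=> y Sy; exact: A_le.
  - by move=> y Sy Ny; exact: hx.
rewrite /T3; apply: (@level_eq _ K3 _ N) => //.
all: first [exact: mB | by move=> z Sz; exact: B_le | by move=> z Sz Nz; exact: hy].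
Qed.


Lemma Msym i j : M i j = M j i.
Proof. by rewrite /M; under eq_integral do rewrite mulrC. Qed.

Lemma Mpsd (v : 'I_d -> R) : 0 <= \sum_i \sum_j v i * v j * M i j.
Proof.
have := int_quad0 (fun i j => v i * v j).
have -> : (fun x => (quad (fun i j => v i * v j) x)%:E) =
          (fun x => ((\sum_i v i * co x i) ^+ 2)%:E).
  apply/funext => x; congr EFin; rewrite /quad expr2 big_distrl /=.
  apply: eq_bigr => i _; rewrite big_distrr /=; apply: eq_bigr => j _; ring.
move=> h; rewrite -lee_fin -h; apply: integral_ge0 => x _.
by rewrite lee_fin sqr_ge0.
Qed.

Lemma Mtr : \sum_i M i i = 1.
Proof.
have := int_quad0 (fun i j => (i == j)%:R).
rewrite (eq_integral (cst 1%:E)); last first.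
  move=> x; rewrite inE => Sx; congr EFin; rewrite -[RHS]Sx /quad /dotp.
  apply: eq_bigr => i _; rewrite (eq_bigr (fun j => 1 * (i == j)%:R * (co x i * co x j))).
    by rewrite sumD1c mul1r.
  by move=> j _; rewrite mul1r.
rewrite (@integral_cst _ _ _ mu S mS) muS mule1 => /esym/eqP; rewrite eqe => /eqP <-.
apply: eq_bigr => i _; rewrite (eq_bigr (fun j => 1 * (i == j)%:R * M i j)).
  by rewrite sumD1c mul1r.
by move=> j _; rewrite mul1r.
Qed.

Lemma iso_quad y : (\int[mu]_(x in S) ((dotp x y) ^+ 2)%:E =
   (\sum_i \sum_j co y i * co y j * M i j)%:E)%E.
Proof.
rewrite -(int_quad0 (fun i j => co y i * co y j)).
apply: eq_integral => x _; congr EFin.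
rewrite /quad /dotp expr2 big_distrl /=; apply: eq_bigr => i _.
rewrite big_distrr /=; apply: eq_bigr => j _; rewrite /co; ring.
Qed.

Lemma T3_alg : T3 = @T3a R d M.
Proof. by []. Qed.


Lemma iso_of (hM : forall i j, M i j = d%:R^-1 * (i == j)%:R) : isotropic mu.
Proof.
move=> y Sy; have Sy' : dotp y y = 1 := Sy.
rewrite iso_quad; congr EFin.
have -> : \sum_i \sum_j co y i * co y j * M i j =
          \sum_i d%:R^-1 * (co y i * co y i).
  apply: eq_bigr => i _.
  rewrite (eq_bigr (fun j => (d%:R^-1 * co y i) * (i == j)%:R * co y j)).
    by rewrite sumD1c mulrA.
  by move=> j _; rewrite hM; ring.
by rewrite -big_distrr /=; rewrite -[RHS]mulr1 -Sy'.
Qed.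

Definition wv (p q : R) (i j : 'I_d) (k : 'I_d) : R := p * (i == k)%:R + q * (j == k)%:R.

Lemma wv_sq p q i j : \sum_k wv p q i j k * wv p q i j k =
  p * p + 2 * p * q * (i == j)%:R + q * q.
Proof.
rewrite /wv (eq_bigr (fun k => (p * p) * (i == k)%:R * (i == k)%:R
   + (2 * p * q) * (i == k)%:R * (j == k)%:R
   + (q * q) * (j == k)%:R * (j == k)%:R)); last by move=> k _; ring.
by rewrite !big_split /= !sumD1c !eqxx !mulr1 eq_sym.
Qed.

Lemma wv_qf p q i j : \sum_k \sum_l wv p q i j k * wv p q i j l * M k l =
  p * p * M i i + p * q * (M i j + M j i) + q * q * M j j.
Proof.
have inner k : \sum_l wv p q i j k * wv p q i j l * M k l =
    wv p q i j k * p * M k i + wv p q i j k * q * M k j.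
  rewrite /wv (eq_bigr (fun l => ((p * (i == k)%:R + q * (j == k)%:R) * p) * (i == l)%:R * M k l
     + ((p * (i == k)%:R + q * (j == k)%:R) * q) * (j == l)%:R * M k l)); last by move=> l _; ring.
  by rewrite big_split /= !sumD1c.
rewrite (eq_bigr _ (fun k _ => inner k)) /wv.
rewrite (eq_bigr (fun k => (p * p) * (i == k)%:R * M k i + (p * q) * (i == k)%:R * M k j
   + (q * p) * (j == k)%:R * M k i + (q * q) * (j == k)%:R * M k j)); last by move=> k _; ring.
rewrite !big_split /= !sumD1c; ring.
Qed.

Lemma iso_w (hiso : isotropic mu) (w : 'I_d -> R) :
  \sum_k w k * w k = 1 -> \sum_k \sum_l w k * w l * M k l = d%:R^-1.
Proof.
move=> hw.
have Sy : S (\row_k w k : 'rV[R]_d).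
  rewrite /sphere /= /dotp -[RHS]hw; apply: eq_bigr => k _; by rewrite mxE.
have := hiso _ Sy; rewrite iso_quad => -[] <-.
by apply: eq_bigr => k _; apply: eq_bigr => l _; rewrite /co !mxE.
Qed.

Lemma iso_M (hiso : isotropic mu) i j : M i j = d%:R^-1 * (i == j)%:R.
Proof.
have diag k : M k k = d%:R^-1.
  have h := iso_w hiso (wv 1 0 k k); rewrite wv_sq wv_qf in h.
  have := h ltac:(ring); move=> <-; ring.
case: (eqVneq i j) => [<-|ij]; first by rewrite diag mulr1.
have h := iso_w hiso (wv (3/5) (4/5) i j); rewrite wv_sq wv_qf (negbTE ij) mulr0n mulr0 addr0 !diag in h.
have := h ltac:(field); rewrite -(Msym j i) mulr0 => h2.
have h3 := h2 isT; lra.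
Qed.


Lemma ballrv (c y : 'rV[R]_d) e :
  ball c e y <-> (0 < e /\ forall i, `|c 0 i - y 0 i| < e).
Proof.
rewrite /ball /= /mx_ball; split => -[e0 h]; split => //.
  by move=> i; exact: h.
by move=> i j; rewrite (ord1 i); exact: h.
Qed.

Lemma rat_near (r e : R) : 0 < e -> exists q : rat, `|r - ratr q| < e.
Proof.
move=> e0.
have := @dense_rat R `]r - e, r + e[%classic.
case.
- by exists r; rewrite /= in_itv /=; apply/andP; split; lra.
- exact: interval_open.
move=> z [/=]; rewrite in_itv /= => /andP[h1 h2] [q _ qz].
by exists q; rewrite qz; rewrite ltr_norml; apply/andP; split; lra.
Qed.

Lemma rat_between (a b : R) : a < b -> exists q : rat, a < ratr q < b.
Proof.
move=> ab.
have := @dense_rat R `]a, b[%classic.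
case.
- by exists ((a + b) / 2); rewrite /= in_itv /=; apply/andP; split; lra.
- exact: interval_open.
by move=> z [/=]; rewrite in_itv /= => h [q _ qz]; exists q; rewrite qz.
Qed.

Lemma supp_null : exists N : set T,
  [/\ measurable N, (mu : measure T R) N = 0%E & forall x, ~ N x -> msupport mu x].
Proof.
pose ballq (p : ('rV[rat]_d * rat)%type) : set T :=
  ball (map_mx ratr p.1 : 'rV[R]_d) (ratr p.2).
have mball p : measurable (ballq p).
  by apply: sub_sigma_algebra; exact: ball_open.
pose Bn (n : nat) : set T := if unpickle n is Some p then
   (if (mu : measure T R) (ballq p) == 0%E then ballq p else set0) else set0.
have nB n : (mu : measure T R).-negligible (Bn n).
  exists (Bn n); split => //.
    rewrite /Bn; case: unpickle => [p|]; last exact: measurable0.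
    by case: ifP => _ //; exact: measurable0.
  rewrite /Bn; case: unpickle => [p|]; last exact: measure0.
  by case: ifP => [/eqP //|_]; exact: measure0.
have [N [mN N0 sub]] := negligible_bigcup nB.
exists N; split => // x Nx U oU Ux.
rewrite lt_neqAle measure_ge0 andbT; apply/eqP => muU0.
apply: Nx; apply: sub.
have /nbhs_ballP [e e0 he] : nbhs x U by apply: open_nbhs_nbhs; split.
have e4 : 0 < e / 4 by rewrite divr_gt0.
have [g hg] : exists g : 'I_d -> rat, forall i, `|(x : 'rV[R]_d) 0 i - ratr (g i)| < e / 4.
  by exists (fun i => xchoose (@rat_near ((x : 'rV[R]_d) 0 i) _ e4)) => i; exact: (xchooseP (@rat_near ((x : 'rV[R]_d) 0 i) _ e4)).
have [rho /andP[rho1 rho2]] : exists rho : rat, e / 4 < ratr rho < e / 2.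
  by apply: rat_between; lra.
pose p := (\row_i g i, rho).
have bsub : ballq p `<=` U.
  move=> y /ballrv [_ hy]; apply: he; apply/ballrv; split => // i.
  have := hy i; rewrite !mxE => hyi.
  apply: (le_lt_trans (ler_distD (ratr (g i)) _ _)).
  have := hg i; rewrite /=; lra.
have mu0 : (mu : measure T R) (ballq p) = 0%E.
  apply/eqP; rewrite eq_le measure_ge0 andbT muU0.
  apply: le_measure => //; rewrite inE //.
  by apply: sub_sigma_algebra.
exists (pickle p) => //; rewrite /Bn pickleK mu0 eqxx.
apply/ballrv; split; first lra.
move=> i; rewrite !mxE distrC; have := hg i; lra.
Qed.


Lemma cvg_dotp {U : Type} (F : set_system U) {FF : Filter F} (a b : U -> 'rV[R]_d)
    (a0 b0 : 'rV[R]_d) :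
  a @ F --> a0 -> b @ F --> b0 ->
  (fun p => dotp (a p) (b p)) @ F --> dotp a0 b0.
Proof.
move=> ca cb; rewrite /dotp.
elim: (index_enum _) => [|i s IH].
  rewrite big_nil; under eq_fun do rewrite big_nil; exact: cvg_cst.
rewrite big_cons; under eq_fun do rewrite big_cons.
apply: (@cvgD _ _ _ _ FF (fun p => a p 0 i * b p 0 i)) => //.
apply: (@cvgM _ _ _ FF (fun p => a p 0 i) (fun p => b p 0 i)).
  exact: (continuous_cvg _ (@coord_continuous _ _ _ 0 i a0) ca).
exact: (continuous_cvg _ (@coord_continuous _ _ _ 0 i b0) cb).
Qed.

Lemma f_near (x0 y0 z0 : 'rV[R]_d) c : f x0 y0 z0 < c ->
  exists U V W : set 'rV[R]_d, [/\ open_nbhs x0 U, open_nbhs y0 V, open_nbhs z0 W &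
    forall x y z, U x -> V y -> W z -> f x y z < c].
Proof.
move=> hc.
pose p0 := ((x0, y0), z0).
pose h (p : ('rV[R]_d * 'rV[R]_d) * 'rV[R]_d) := f p.1.1 p.1.2 p.2.
have c1 : (fun p : ('rV[R]_d * 'rV[R]_d) * 'rV[R]_d => p.1.1) @ nbhs p0 --> x0.
  exact: (cvg_comp _ _ cvg_fst cvg_fst).
have c2 : (fun p : ('rV[R]_d * 'rV[R]_d) * 'rV[R]_d => p.1.2) @ nbhs p0 --> y0.
  exact: (cvg_comp _ _ cvg_fst cvg_snd).
have c3 : (fun p : ('rV[R]_d * 'rV[R]_d) * 'rV[R]_d => p.2) @ nbhs p0 --> z0.
  exact: cvg_snd.
have ch : h @ nbhs p0 --> h p0.
  apply: cvgM; first apply: cvgM.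
  - exact: cvg_dotp c1 c2.
  - exact: cvg_dotp c1 c3.
  - exact: cvg_dotp c2 c3.
have := cvgr_lt _ ch _ hc.
case=> [[A1 A2] [nA1 nA2] sA].
case: nA1 => [[A11 A12] [nA11 nA12] sA1].
move: nA11 nA12 nA2; rewrite !nbhsE => -[U oU sU] [V oV sV] [W oW sW].
exists U, V, W; split => // x y z xU yV zW.
apply: (sA ((x, y), z)); split => //=; last exact: sW.
by apply: sA1; split; [exact: sU|exact: sV].
Qed.


Lemma muSC : (mu : measure T R) (~` S) = 0%E.
Proof.
by have := probability_setC mu mS; rewrite hS subee.
Qed.

Lemma mm_gt0 (U : set T) : measurable U -> (0 < (mu : measure T R) U)%E -> 0 < mm U.
Proof.
move=> mU hU; rewrite /mm; apply: fine_gt0; apply/andP; split; last first.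
  apply: (@le_lt_trans _ _ 1%E); last exact: ltry.
  rewrite -(probability_setT mu); apply: le_measure; rewrite ?inE //.
  by apply: measurableI => //; exact: mS.
have e := measureDI (mu : measure T R) mU mS.
have : ((mu : measure T R) (U `\` S) <= 0)%E.
  rewrite -muSC; apply: le_measure; rewrite ?inE //.
  all: try (by apply: measurableD => //; exact: mS).
  all: try (by apply: measurableC; exact: mS).
  all: try (by move=> x []).
move=> h0; move: hU; rewrite e => hU.
apply: (lt_le_trans hU); rewrite -[leRHS]add0e; apply: leeD => //.
Qed.

Lemma main (hd : (0 < d)%N) :
  let I := (\int[mu]_(z in sphere R d) \int[mu]_(y in sphere R d)
             \int[mu]_(x in sphere R d)
               (`| dotp x y * dotp x z * dotp y z |)%:E)%E in
  ((d%:R ^+ 2)^-1%:E <= I)%E /\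
  (I = ((d%:R ^+ 2)^-1)%:E <->
     isotropic mu /\
     (forall x y z, msupport mu x -> msupport mu y -> msupport mu z ->
        0 <= dotp x y * dotp x z * dotp y z)).
Proof.
move=> I.
have IE : I = (\int[mu]_(z in S) B z)%E by [].
have [Tlow Teq] := @alg R d hd M Msym Mpsd Mtr.
rewrite -T3_alg in Tlow Teq.
have base : (T3%:E <= I)%E.
  rewrite IE; have := @chain 0 setT setT setT measurableT measurableT measurableT.
  rewrite mul0r addr0; apply => x y z _ _ _; rewrite mul0r addr0; exact: ler_norm.
have d2 : (d%:R ^+ 2)^-1 = d%:R^-1 ^+ 2 :> R by rewrite exprVn.
split.
  by rewrite d2; apply: le_trans base; rewrite lee_fin.
split.
  move=> hI.
  have T3eq : T3 = d%:R^-1 ^+ 2.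
    apply/eqP; rewrite eq_le Tlow andbT -lee_fin -d2 -hI; exact: base.
  have hM := Teq T3eq.
  split; first exact: iso_of hM.
  move=> x y z sx sy sz; rewrite leNgt; apply/negP => hneg.
  have [U [V [W [[oU Ux] [oV Vy] [oW Wz] hUVW]]]] := @f_near x y z (f x y z / 2)
     ltac:(rewrite /f; lra).
  have mU : measurable (U : set T) by apply: sub_sigma_algebra.
  have mV : measurable (V : set T) by apply: sub_sigma_algebra.
  have mW : measurable (W : set T) by apply: sub_sigma_algebra.
  pose e := - f x y z.
  have hf : forall x' y' z', S x' -> S y' -> S z' ->
      f x' y' z' + e * (\1_U x' * \1_V y' * \1_W z') <= `|f x' y' z'|.
    move=> x' y' z' _ _ _; rewrite !indicE.
    have hn := ler_norm (- f x' y' z'); rewrite normrN in hn.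
    have hp := ler_norm (f x' y' z').
    case: (boolP (x' \in U)) => hx; case: (boolP (y' \in V)) => hy;
      case: (boolP (z' \in W)) => hz;
      rewrite ?mulr1n ?mulr0n ?mulr0 ?mul0r ?mulr1 ?addr0; try lra.
    have := hUVW x' y' z' (set_mem hx) (set_mem hy) (set_mem hz).
    rewrite /e; lra.
  have := @chain e U V W mU mV mW hf; rewrite -IE hI d2 -T3eq lee_fin.
  have pU := @mm_gt0 U mU (sx U oU Ux).
  have pV := @mm_gt0 V mV (sy V oV Vy).
  have pW := @mm_gt0 W mW (sz W oW Wz).
  have pe : 0 < e by rewrite /e; move: hneg; rewrite /f; lra.
  have : 0 < e * (mm U * mm V * mm W) by rewrite !mulr_gt0.
  lra.
move=> [hiso hsupp].
have hM := iso_M hiso.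
have [N [mN N0 hN]] := supp_null.
rewrite IE (@chain_eq N mN N0); last first.
  move=> x y z _ _ _ nx ny nz; apply: hsupp; exact: hN.
congr EFin; rewrite d2 /T3 /c3.
have inner j k : \sum_i M i j * M i k = d%:R^-1 * d%:R^-1 * (j == k)%:R.
  rewrite (eq_bigr (fun i => (d%:R^-1 * d%:R^-1) * (j == i)%:R * (i == k)%:R)).
    by rewrite sumD1c.
  by move=> i _; rewrite !hM [(i == j)]eq_sym; ring.
under eq_bigr do under eq_bigr do rewrite inner hM.
rewrite (eq_bigr (fun j => d%:R^-1 ^+ 3)); last first.
  move=> j _; rewrite (eq_bigr (fun k => (d%:R^-1 ^+ 3) * (j == k)%:R * (j == k)%:R)).
    by rewrite sumD1c eqxx mulr1.
  by move=> k _; ring.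
rewrite sumr_const card_ord -mulr_natr !mul1r.
have dn0 : d%:R != 0 :> R by rewrite pnatr_eq0 -lt0n.
by field.
Qed.

End Main.

Theorem corollary4p3 (R : realType) (d : nat) (hd : (0 < d)%N)
    (mu : probability (Rd R d) R) (hS : mu (sphere R d) = 1%E) :
  let I := (\int[mu]_(z in sphere R d) \int[mu]_(y in sphere R d)
             \int[mu]_(x in sphere R d)
               (`| dotp x y * dotp x z * dotp y z |)%:E)%E in
  ((d%:R ^+ 2)^-1%:E <= I)%E /\
  (I = ((d%:R ^+ 2)^-1)%:E <->
     isotropic mu /\
     (forall x y z, msupport mu x -> msupport mu y -> msupport mu z ->
        0 <= dotp x y * dotp x z * dotp y z)).
Proof. exact: (@main R d mu hS hd). Qed.
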